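(* Let $r\geq 2$ and let $\mathcal{G}$, $\mathcal{H}$ and $\Gamma$ be $r$-uniform supertrees, where $\mathcal{G}$ and $\mathcal{H}$ have the same number of vertices. Let $u\in V(\mathcal{G})$ and $v\in V(\mathcal{H})$. If $\varphi(\mathcal{G},x)=\varphi(\mathcal{H},x)$ and $\varphi(\mathcal{G}-u,x)=\varphi(\mathcal{H}-v,x)$, then for every $w\in V(\Gamma)$ we have $\varphi(\mathcal{G}(u,w)\Gamma,x)=\varphi(\mathcal{H}(v,w)\Gamma,x)$.
   Context: An $r$-uniform hypergraph has every edge consisting of exactly $r$ vertices; an $r$-uniform supertree is a connected acyclic $r$-uniform hypergraph (for $r=2$, an ordinary tree). For an $r$-uniform hypergraph $\mathcal{H}$ on $n$ vertices, $m(\mathcal{H},k)$ denotes the number of $k$-matchings (sets of $k$ pairwise disjoint edges), with $m(\mathcal{H},0)=1$, and the matching polynomial is $\varphi(\mathcal{H},x)=\sum_{k\geq 0}(-1)^k m(\mathcal{H},k)x^{n-kr}$. For a vertex $u$, $\mathcal{H}-u$ is obtained by deleting $u$ and all edges containing $u$ (the other vertices of those edges remain). For disjoint hypergraphs $\mathcal{G},\Gamma$ with $u\in V(\mathcal{G})$, $w\in V(\Gamma)$, $\mathcal{G}(u,w)\Gamma$ denotes the hypergraph obtained from $\mathcal{G}\cup\Gamma$ by identifying $u$ with $w$. *)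

(* Defs.v *)
From mathcomp Require Import all_boot all_order all_algebra.
Set Implicit Arguments. Unset Strict Implicit. Unset Printing Implicit Defensive.
Import GRing.Theory.
Local Open Scope ring_scope.

Record hgraph (T : finType) := HGraph {
  hverts : {set T};
  hedges : {set {set T}} }.

Section Hyper.
Variable T : finType.
Implicit Types (H : hgraph T).

Definition uniform (r : nat) H : Prop :=
  forall e, e \in hedges H -> e \subset hverts H /\ #|e| = r.

Definition hadj H : rel T :=
  fun x y => [exists e in hedges H, (x \in e) && (y \in e)].

Definition hconnected H : Prop :=
  forall x y, x \in hverts H -> y \in hverts H -> connect (hadj H) x y.

(* Berge cycle: distinct vertices v_0..v_{k-1} (here vs = [:: v_0; ...])
   and distinct edges e_0..e_{k-1}, k >= 2, with v_i \in e_i and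
   v_{i+1 mod k} \in e_i. *)
Definition berge_cycle H (v0 : T) (vs : seq T) (es : seq {set T}) : Prop :=
  let cyc := v0 :: vs in
  [/\ (2 <= size cyc)%N, size es = size cyc, uniq cyc /\ uniq es,
      {subset es <= hedges H} &
      (forall i, (i < size cyc)%N ->
        (nth v0 cyc i \in nth set0 es i) /\
        (nth v0 cyc ((i.+1) %% size cyc) \in nth set0 es i)) ].

Definition hacyclic H : Prop :=
  forall v0 vs es, ~ berge_cycle H v0 vs es.

Definition supertree (r : nat) H : Prop :=
  [/\ uniform r H, hconnected H & hacyclic H].

Definition is_matching H (M : {set {set T}}) : bool :=
  (M \subset hedges H) &&
  [forall e1 in M, forall e2 in M, (e1 != e2) ==> [disjoint e1 & e2]].

Definition nmatch H (k : nat) : nat :=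
  #|[set M : {set {set T}} | is_matching H M & #|M| == k]|.

Definition matching_poly (r : nat) H : {poly int} :=
  \sum_(k < #|hedges H|.+1)
     ((-1) ^+ k * (nmatch H k)%:R) *: 'X^(#|hverts H| - k * r).

Definition hdelv H (u : T) : hgraph T :=
  HGraph (hverts H :\ u) [set e in hedges H | u \notin e].
End Hyper.

(* G(u,w)Gamma: disjoint union of G (on T1) and Gamma (on T2), realised on
   T1 + T2, with w identified with u. *)
Definition coalesce (T1 T2 : finType) (G : hgraph T1) (u : T1)
    (Ga : hgraph T2) (w : T2) : hgraph (T1 + T2)%type :=
  let g := fun x : T2 => if x == w then @inl T1 T2 u else inr x in
  HGraph ([set (@inl T1 T2 x) | x in hverts G] :|: [set (@inr T1 T2 x) | x in hverts Ga :\ w])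
         ([set [set (@inl T1 T2 x) | x in e] | e : {set T1} in hedges G] :|:
          [set g @: e | e : {set T2} in hedges Ga]).

(* Main.v *)
Require Import Defs.
From mathcomp Require Import all_boot all_order all_algebra.
From mathcomp Require Import zify.
Set Implicit Arguments. Unset Strict Implicit. Unset Printing Implicit Defensive.
Import GRing.Theory Num.Theory.


Section Basic.
Variable T : finType.
Implicit Types (H : hgraph T).

Lemma nmatch_gt_edges H k : (#|hedges H| < k)%N -> nmatch H k = 0%N.
Proof.
move=> lt; apply/eqP; rewrite cards_eq0; apply/eqP/setP => M.
rewrite !inE; apply/negP => /andP[/andP[sub _] /eqP ek].
by move: (subset_leq_card sub); rewrite ek leqNgt lt.
Qed.

Local Open Scope ring_scope.

Lemma mp_wide r H N : (#|hedges H| < N)%N ->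
  matching_poly r H = \sum_(k < N)
     ((-1) ^+ k * (nmatch H k)%:R) *: 'X^(#|hverts H| - k * r).
Proof.
move=> lt; rewrite /matching_poly (big_ord_widen _ (fun k => ((-1) ^+ k * (nmatch H k)%:R) *: 'X^(#|hverts H| - k * r)) lt).
rewrite [RHS](bigID (fun i : 'I_N => (i < #|hedges H|.+1)%N)) /=.
rewrite [X in _ = _ + X]big1 ?addr0 // => i; rewrite -leqNgt => le.
by rewrite nmatch_gt_edges // mulr0 scale0r.
Qed.

Lemma nmatch_bound r H k : uniform r H -> (#|hverts H| < k * r)%N -> nmatch H k = 0%N.
Proof.
move=> U lt; apply/eqP; rewrite cards_eq0; apply/eqP/setP => M.
rewrite !inE; apply/negP => /andP[/andP[sub dis] /eqP ek].
have tri : trivIset M.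
  apply/trivIsetP => A B AM BM AB.
  by move/forall_inP: dis => /(_ A AM) /forall_inP /(_ B BM) /implyP /(_ AB).
have e1 : (\sum_(B in M) #|B| = k * r)%N.
  rewrite (eq_bigr (fun _ => r)); last by move=> B BM; case: (U B (subsetP sub B BM)).
  by rewrite sum_nat_const ek.
have : (#|cover M| <= #|hverts H|)%N.
  apply: subset_leq_card; apply/bigcupsP => B BM; by case: (U B (subsetP sub B BM)).
by move/eqP: tri => <-; rewrite e1 leqNgt lt.
Qed.

End Basic.
Section BB.
Local Open Scope ring_scope.

Lemma mp_coef (T : finType) r (H : hgraph T) N k : (0 < r)%N -> uniform r H ->
  (#|hedges H| < N)%N -> (k < N)%N -> (k * r <= #|hverts H|)%N ->
  (matching_poly r H)`_(#|hverts H| - k * r) = (-1) ^+ k * (nmatch H k)%:R.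
Proof.
move=> r0 U ltN kN kr; rewrite (mp_wide r ltN) coef_sum.
rewrite (bigD1 (Ordinal kN)) //= coefZ coefXn eqxx mulr1 big1 ?addr0 // => j /eqP jk.
rewrite coefZ coefXn.
have [jr|jr] := leqP (j * r) #|hverts H|.
  case: eqP => [e|]; last by rewrite mulr0.
  exfalso; apply: jk; apply: val_inj => /=; apply/eqP.
  rewrite -(eqn_pmul2r r0); apply/eqP; lia.
by rewrite (nmatch_bound U jr) mulr0 mul0r.
Qed.

Lemma mp_inj (T1 T2 : finType) r (G : hgraph T1) (H : hgraph T2) :
  (0 < r)%N -> uniform r G -> uniform r H -> #|hverts G| = #|hverts H| ->
  matching_poly r G = matching_poly r H -> forall k, nmatch G k = nmatch H k.
Proof.
move=> r0 UG UH en E k.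
have [kr|kr] := leqP (k * r) #|hverts G|; last first.
  by rewrite (nmatch_bound UG kr) (nmatch_bound UH) // -en.
pose N := (#|hedges G| + #|hedges H| + k).+1.
have h1 := mp_coef (N := N) (k := k) r0 UG.
have h2 := mp_coef (N := N) (k := k) r0 UH.
rewrite /N in h1 h2.
have {}h1 := h1 ltac:(lia) ltac:(lia) kr.
have {}h2 := h2 ltac:(lia) ltac:(lia) ltac:(lia).
rewrite E en h2 in h1.
move: h1; move/(congr1 (fun t => (-1) ^+ k * t)); rewrite !signrMK => /eqP.
by rewrite eqr_nat => /eqP.
Qed.

Lemma mp_counts (T1 T2 : finType) r (G : hgraph T1) (H : hgraph T2) :
  #|hverts G| = #|hverts H| -> (forall k, nmatch G k = nmatch H k) ->
  matching_poly r G = matching_poly r H.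
Proof.
move=> en E; pose N := (#|hedges G| + #|hedges H|).+1.
rewrite (@mp_wide _ r G N) ?(@mp_wide _ r H N) /N; try lia.
by apply: eq_bigr => k _; rewrite E en.
Qed.
End BB.

Lemma hdelv_match (T : finType) (G : hgraph T) u M :
  is_matching (hdelv G u) M = is_matching G M && ~~ [exists e in M, u \in e].
Proof.
rewrite /is_matching /=.
have -> : (M \subset [set e in hedges G | u \notin e]) =
          (M \subset hedges G) && ~~ [exists e in M, u \in e].
  apply/idP/idP.
    move=> S; apply/andP; split.
      by apply/subsetP => e /(subsetP S); rewrite inE => /andP[].
    by apply/negP => /exists_inP[e /(subsetP S)]; rewrite inE => /andP[_ /negP].
  case/andP => S N; apply/subsetP => e eM; rewrite inE (subsetP S _ eM) /=.
  by apply: contra N => ue; apply/exists_inP; exists e.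
by rewrite andbAC.
Qed.

Lemma uniform_hdelv (T : finType) r (G : hgraph T) u :
  uniform r G -> uniform r (hdelv G u).
Proof.
move=> U e; rewrite /= inE => /andP[eG ue]; case: (U e eG) => S ce; split => //.
apply/subsetP => x xe; rewrite !inE (subsetP S _ xe) andbT.
by apply: contraNneq ue => <-.
Qed.

Section Coal.
Variables (T1 T3 : finType) (G : hgraph T1) (u : T1) (Ga : hgraph T3) (w : T3) (r : nat).
Hypotheses (r2 : (1 < r)%N) (UGa : uniform r Ga).

Definition g (x : T3) : (T1 + T3)%type := if x == w then inl u else inr x.
Lemma g_inj : injective g.
Proof.
move=> x y; rewrite /g; case: eqP => [->|xw]; case: eqP => [->|yw] //.
by case.
Qed.

Lemma inl_inj' : injective (@inl T1 T3). Proof. by move=> x y []. Qed.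
Lemma inr_inj' : injective (@inr T1 T3). Proof. by move=> x y []. Qed.

Definition imL (e : {set T1}) : {set (T1 + T3)%type} := inl @: e.
Definition imG (e : {set T3}) : {set (T1 + T3)%type} := g @: e.
Lemma imL_inj : injective imL. Proof. exact: imset_inj inl_inj'. Qed.
Lemma imG_inj : injective imG. Proof. exact: imset_inj g_inj. Qed.

Lemma edge_nw e : e \in hedges Ga -> exists2 y, y \in e & y != w.
Proof.
move=> eG; case: (UGa eG) => _ ce.
have : ~~ (e \subset [set w]).
  by apply/negP => /subset_leq_card; rewrite cards1 ce; lia.
by case/subsetPn => y ye; rewrite inE => yw; exists y.
Qed.

Lemma imLG_neq e1 e2 : e2 \in hedges Ga -> imL e1 != imG e2.
Proof.
move=> /edge_nw[y ye yw]; apply/eqP => E.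
have : g y \in imG e2 by apply: imset_f.
by rewrite -E /g (negPf yw) => /imsetP[x _].
Qed.

Lemma disjLG e1 e2 : [disjoint imL e1 & imG e2] = ~~ ((u \in e1) && (w \in e2)).
Proof.
apply/idP/idP.
  move=> D; apply/negP => /andP[ue we]; rewrite -setI_eq0 in D.
  have : inl u \in imL e1 :&: imG e2.
    rewrite inE imset_f //; apply/imsetP; exists w => //; by rewrite /g eqxx.
  by rewrite (eqP D) inE.
move=> N; rewrite -setI_eq0; apply/eqP/setP => z; rewrite !inE.
apply/negP => /andP[/imsetP[x xe ->] /imsetP[y ye]]; rewrite /g.
case: eqP => [yw [xu]|//]; subst.
by rewrite xe ye in N.
Qed.

Lemma disjLL e1 e2 : [disjoint imL e1 & imL e2] = [disjoint e1 & e2].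
Proof. exact: imset_disjoint inl_inj'. Qed.
Lemma disjGG e1 e2 : [disjoint imG e1 & imG e2] = [disjoint e1 & e2].
Proof. exact: imset_disjoint g_inj. Qed.

Local Notation pT := ({set {set T3}} * {set {set T1}})%type.
Definition phi (p : pT) : {set {set (T1 + T3)%type}} :=
  imG @: p.1 :|: imL @: p.2.

Lemma card_phi (p : pT) : p.1 \subset hedges Ga -> #|phi p| = (#|p.1| + #|p.2|)%N.
Proof.
move=> S; rewrite /phi cardsU.
have -> : imG @: p.1 :&: imL @: p.2 = set0.
  apply/setP => A; rewrite !inE; apply/negP => /andP[/imsetP[e2 e2M ->] /imsetP[e1 _ E]].
  by have := imLG_neq e1 (subsetP S _ e2M); rewrite E eqxx.
by rewrite cards0 subn0 !card_imset //; [exact: imL_inj | exact: imG_inj].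
Qed.

Definition conflict (p : {set {set T3}} * {set {set T1}}) :=
  [exists e in p.2, u \in e] && [exists e in p.1, w \in e].

Definition PP k := [set p : pT | [&& is_matching Ga p.1, is_matching G p.2,
   (#|p.1| + #|p.2| == k)%N & ~~ conflict p]].

Lemma hedgesC : hedges (coalesce G u Ga w) = imL @: hedges G :|: imG @: hedges Ga.
Proof. by []. Qed.

Lemma PP_sub k (p : pT) : p \in PP k -> p.1 \subset hedges Ga.
Proof. by rewrite inE => /and4P[/andP[]]. Qed.

Lemma phi_match k (p : pT) : p \in PP k ->
  is_matching (coalesce G u Ga w) (phi p) && (#|phi p| == k).
Proof.
move=> pP; have S2 := PP_sub pP; move: pP.
rewrite inE => /and4P[/andP[s2 d2] /andP[s1 d1] ek nc].
rewrite card_phi // ek andbT; apply/andP; split.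
  rewrite hedgesC; apply/subsetP => A; rewrite /phi !inE.
  case/orP => /imsetP[e eM ->].
    by apply/orP; right; apply: imset_f; exact: (subsetP s2).
  by apply/orP; left; apply: imset_f; exact: (subsetP s1).
apply/forall_inP => A AP; apply/forall_inP => B BP; apply/implyP => AB.
move: AP BP AB; rewrite /phi !inE => /orP[]/imsetP[e1 e1M ->] /orP[]/imsetP[e2 e2M ->] AB.
- rewrite disjGG; move/forall_inP: d2 => /(_ e1 e1M)/forall_inP/(_ e2 e2M)/implyP; apply.
  by apply: contraNneq AB => ->.
- rewrite disjoint_sym disjLG; apply: contra nc => /andP[ue we]; apply/andP; split;
  by apply/exists_inP; eexists; eauto.
- rewrite disjLG; apply: contra nc => /andP[ue we]; apply/andP; split;
  by apply/exists_inP; eexists; eauto.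
- rewrite disjLL; move/forall_inP: d1 => /(_ e1 e1M)/forall_inP/(_ e2 e2M)/implyP; apply.
  by apply: contraNneq AB => ->.
Qed.

Lemma recover (p : pT) : p.1 \subset hedges Ga ->
  p = ([set e in hedges Ga | imG e \in phi p], [set e | imL e \in phi p]).
Proof.
case: p => M2 M1 /= S; congr pair; apply/setP => e; rewrite /phi !inE.
  rewrite (@mem_imset _ _ imG _ e imG_inj).
  case eM: (e \in M2); first by rewrite (subsetP S _ eM).
  case eG: (e \in hedges Ga) => //=; apply/esym/negP => /imsetP[e' _ E].
  by have := imLG_neq e' eG; rewrite E eqxx.
rewrite (@mem_imset _ _ imL _ e imL_inj).
case: (imsetP) => // -[e' e'M E].
by have := imLG_neq e (subsetP S _ e'M); rewrite E eqxx.
Qed.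

Lemma phi_inj k : {in PP k &, injective phi}.
Proof.
move=> p q pP qP E.
by rewrite (recover (PP_sub pP)) (recover (PP_sub qP)) E.
Qed.

Lemma phi_onto k :
  [set M | is_matching (coalesce G u Ga w) M & #|M| == k] = phi @: PP k.
Proof.
apply/setP => M; rewrite inE; apply/idP/idP; last first.
  by case/imsetP => p pP ->; exact: phi_match.
case/andP => /andP[sM dM] /eqP ek.
pose p := ([set e in hedges Ga | imG e \in M], [set e in hedges G | imL e \in M]).
have S : p.1 \subset hedges Ga by apply/subsetP => e; rewrite inE => /andP[].
have pM : phi p = M.
  apply/setP => A; rewrite /phi !inE; apply/idP/idP.
    by case/orP => /imsetP[e]; rewrite inE => /andP[_ eM] ->.
  move=> AM; move: (subsetP sM A AM); rewrite hedgesC inE => /orP[]/imsetP[e eE AE].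
    by apply/orP; right; apply/imsetP; exists e => //; rewrite inE eE -AE AM.
  by apply/orP; left; apply/imsetP; exists e => //; rewrite inE eE -AE AM.
have dis A B : A \in M -> B \in M -> A != B -> [disjoint A & B].
  by move=> AM BM AB; move/forall_inP: dM => /(_ A AM)/forall_inP/(_ B BM)/implyP; apply.
apply/imsetP; exists p => //; rewrite inE; apply/and4P; split.
- apply/andP; split => //; apply/forall_inP => e1; rewrite inE => /andP[_ e1M].
  apply/forall_inP => e2; rewrite inE => /andP[_ e2M]; apply/implyP => ne.
  by rewrite -disjGG; apply: dis => //; rewrite (inj_eq imG_inj).
- apply/andP; split; first by apply/subsetP => e; rewrite inE => /andP[].
  apply/forall_inP => e1; rewrite inE => /andP[_ e1M].
  apply/forall_inP => e2; rewrite inE => /andP[_ e2M]; apply/implyP => ne.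
  by rewrite -disjLL; apply: dis => //; rewrite (inj_eq imL_inj).
- by rewrite -card_phi // pM ek.
- apply/negP => /andP[/exists_inP[e1 + ue1] /exists_inP[e2 + we2]].
  rewrite !inE => /andP[_ e1M] /andP[e2G e2M].
  have := dis _ _ e1M e2M (imLG_neq e1 e2G).
  by rewrite disjLG ue1 we2.
Qed.

Lemma nmatch_coal k : nmatch (coalesce G u Ga w) k =
  \sum_(M2 | is_matching Ga M2)
     #|[set M1 | [&& is_matching G M1, (#|M2| + #|M1| == k)%N &
         ~~ ([exists e in M1, u \in e] && [exists e in M2, w \in e])]]|.
Proof.
rewrite /nmatch phi_onto card_in_imset; last exact: phi_inj.
under eq_bigr do rewrite -sum1_card.
rewrite pair_big_dep -sum1_card; apply: eq_bigl => p; rewrite !inE /conflict.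
by case: (is_matching Ga p.1).
Qed.

End Coal.

Lemma F_eq (T1 T3 : finType) (G : hgraph T1) u (w : T3) (M2 : {set {set T3}}) k :
  #|[set M1 | [&& is_matching G M1, (#|M2| + #|M1| == k)%N &
         ~~ ([exists e in M1, u \in e] && [exists e in M2, w \in e])]]| =
  if (#|M2| <= k)%N then
    (if [exists e in M2, w \in e] then nmatch (hdelv G u) (k - #|M2|)
     else nmatch G (k - #|M2|)) else 0%N.
Proof.
case: leqP => Hk.
  have E (M1 : {set {set T1}}) : (#|M2| + #|M1| == k)%N = (#|M1| == k - #|M2|)%N.
    by apply/idP/idP => /eqP ?; apply/eqP; lia.
  case: ifP => hw; rewrite /nmatch; apply: eq_card => M1; rewrite !inE ?andbT ?andbF E //.
    by rewrite hdelv_match; case: (is_matching G M1) => //=; rewrite andbC.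
  by rewrite andbT.
apply/eqP; rewrite cards_eq0; apply/eqP/setP => M1; rewrite !inE.
by apply/negP => /and3P[_ /eqP ? _]; lia.
Qed.

Lemma card_vC (T1 T3 : finType) (G : hgraph T1) u (Ga : hgraph T3) w :
  #|hverts (coalesce G u Ga w)| = (#|hverts G| + #|hverts Ga :\ w|)%N.
Proof.
rewrite /= cardsU.
have -> : [set inl x | x in hverts G] :&: [set inr x | x in hverts Ga :\ w] = set0.
  by apply/setP => z; rewrite !inE; apply/negP => /andP[/imsetP[x _ ->] /imsetP[y _]].
rewrite cards0 subn0 !card_imset //; [exact: inr_inj' | exact: inl_inj'].
Qed.

Theorem lemma8 (r : nat) (T1 T2 T3 : finType)
  (G : hgraph T1) (H : hgraph T2) (Ga : hgraph T3) (u : T1) (v : T2) :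
  (2 <= r)%N ->
  supertree r G -> supertree r H -> supertree r Ga ->
  #|hverts G| = #|hverts H| ->
  u \in hverts G -> v \in hverts H ->
  matching_poly r G = matching_poly r H ->
  matching_poly r (hdelv G u) = matching_poly r (hdelv H v) ->
  forall w : T3, w \in hverts Ga ->
    matching_poly r (coalesce G u Ga w) = matching_poly r (coalesce H v Ga w).
Proof.
move=> r2 [UG _ _] [UH _ _] [UGa _ _] en uG vH E1 E2 w wGa.
have r0 : (0 < r)%N by lia.
have e1 := mp_inj r0 UG UH en E1.
have en' : #|hverts (hdelv G u)| = #|hverts (hdelv H v)|.
  rewrite /=; move: en; rewrite (cardsD1 u) (cardsD1 v) uG vH /= => en; lia.
have e2 := mp_inj r0 (uniform_hdelv (u:=u) UG) (uniform_hdelv (u:=v) UH) en' E2.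
apply: mp_counts; first by rewrite !card_vC en.
move=> k; rewrite (nmatch_coal G u w r2 UGa) (nmatch_coal H v w r2 UGa).
by apply: eq_bigr => M2 _; rewrite !F_eq e1 e2.
Qed.
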